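(* (Correctness.) Let $A$ be a ground (base) type and $v$ a value of type $A$. If $\cdot\vdash M:A$ in CC and $M\triangleright^* v$, then $\Delta_\Gamma\cup\Delta_M\vdash[\![M]\!]\triangleright^* v'$ in DCC for some $v'$ with $v'\equiv[\![v]\!]$, where $\Gamma=\cdot$, $\Delta_\Gamma=[\![\Gamma]\!]_d$ and $\Delta_M=[\![M]\!]_d$.
   Context: CC is the Calculus of Constructions with universes $U_0,U_1,\dots$, informally extended with base (ground) types such as the unit type and natural numbers whose types and values contain no $\lambda$-abstractions. Expressions $x\mid U_i\mid\Pi x{:}A.B\mid L\,M\mid\lambda x{:}A.M$; reduction $(\lambda x{:}A.N)\,M\triangleright N[M/x]$, $\triangleright^*$ zero or more steps; typing $\Gamma\vdash M:A$ by the standard CC rules (variable, $U_i:U_{i+1}$, $\Pi$ in $U_{\max(i,j)}$, application with result type $B[N/x]$, abstraction, conversion up to $\beta\eta$-equivalence). DCC: expressions $x\mid U_i\mid\Pi x{:}A.B\mid L@M\mid\ell_i\{\overline M\}$ with label names $\ell_i$ and lists $\overline M$; label contexts $\Delta::=\cdot\mid\Delta,\ell_i(\{\overline x{:}\overline A\},x{:}A\mapsto L:B)$. Reduction: $\Delta\vdash\ell\{\overline M\}@N\triangleright L[\overline M/\overline x,N/x]$ when $\ell(\{\overline x{:}\overline A\},x{:}A\mapsto L:B)\in\Delta$; $\triangleright^*$ zero or more steps. Equivalence $\equiv$ in DCC: two terms are equivalent if they reduce to a common term, or by the $\eta$-rule: if $L\triangleright^*\ell\{\overline N\}$, $M\triangleright^*M'$,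 $\ell(\{\overline x{:}\overline A\},x{:}A\mapsto N:B)\in\Delta$ and $N[\overline N/\overline x]\equiv M'@x$ then $L\equiv M$ (and symmetrically). Translation (by induction on the implicit typing derivation; each source $\lambda$ has a distinct tag $i$, written $\lambda^i$, corresponding to label $\ell_i$). $\mathrm{FV}(M)$ for $\Gamma\vdash M:A$: with $x_1,\dots,x_n$ the unbound variables of $M$ and $A$ and $\Gamma\vdash x_k:A_k$, $\mathrm{FV}(M)=\mathrm{FV}(A_1)\cup\dots\cup\mathrm{FV}(A_n)\cup(x_1{:}A_1,\dots,x_n{:}A_n)$, where $\cup$ appends the entries of the right operand not already in the left, preserving order. $[\![-]\!]$: $x\mapsto x$, $U_i\mapsto U_i$, $\Pi x{:}A.B\mapsto\Pi x{:}[\![A]\!].[\![B]\!]$, $M\,N\mapsto[\![M]\!]@[\![N]\!]$, $\lambda^ix{:}A.M\mapsto\ell_i\{\overline x\}$ where $\overline x{:}\overline A=\mathrm{FV}(\lambda^ix{:}A.M)$; base types and values translate to themselves. $[\![-]\!]_d$: universe (and base types/values) $\mapsto\cdot$; variable of type $A\mapsto[\![A]\!]_d$; $\Pi x{:}A.B\mapsto[\![A]\!]_d\cup[\![B]\!]_d$; $M\,N:B[N/x]$ (with $M:\Pi x{:}A.B$) $\mapsto[\![M]\!]_d\cup[\![N]\!]_d\cup[\![B[N/x]]\!]_d$; $\lambda^ix{:}A.M:\Pi x{:}A.B\mapsto([\![A]\!]_d\cup[\![M]\!]_d),\ell_i(\{\overline x{:}[\![\overline A]\!]\},x{:}[\![A]\!]\mapsto[\![M]\!]:[\![B]\!])$;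 a conversion from $M:A$ to $M:B\mapsto[\![M]\!]_d\cup[\![B]\!]_d$. On contexts: $[\![\cdot]\!]_d=\cdot$, $[\![\Gamma,x{:}A]\!]_d=[\![\Gamma]\!]_d\cup[\![A]\!]_d$. *)

(* Defs.v *)
From Stdlib Require Import List Arith Bool Relations.
Import ListNotations.

(* [Lam t A M] is lambda^t x:A. M  (t = the distinct tag of this lambda).
   [Base b] is the b-th base (ground) type, [Val b n] its n-th value. *)
Inductive term : Type :=
| var (n : nat)
| U (i : nat)
| Pi (A B : term)
| App (M N : term)
| Lam (t : nat) (A M : term)
| Base (b : nat)
| Val (b n : nat).

Definition up_ren (r : nat -> nat) : nat -> nat :=
  fun i => match i with 0 => 0 | S i => S (r i) end.

Fixpoint ren (r : nat -> nat) (t : term) : term :=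
  match t with
  | var n => var (r n)
  | U i => U i
  | Pi A B => Pi (ren r A) (ren (up_ren r) B)
  | App M N => App (ren r M) (ren r N)
  | Lam l A M => Lam l (ren r A) (ren (up_ren r) M)
  | Base b => Base b
  | Val b n => Val b n
  end.

Definition lift (k : nat) (t : term) : term := ren (fun i => k + i) t.

Definition up (s : nat -> term) : nat -> term :=
  fun i => match i with 0 => var 0 | S i => lift 1 (s i) end.

Fixpoint subst (s : nat -> term) (t : term) : term :=
  match t with
  | var n => s n
  | U i => U i
  | Pi A B => Pi (subst s A) (subst (up s) B)
  | App M N => App (subst s M) (subst s N)
  | Lam l A M => Lam l (subst s A) (subst (up s) M)
  | Base b => Base b
  | Val b n => Val b n
  end.

Definition subst1 (M N : term) : term :=
  subst (fun i => match i with 0 => N | S j => var j end) M.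

Inductive compat (R : term -> term -> Prop) : term -> term -> Prop :=
| c_base x y : R x y -> compat R x y
| c_piL A A' B : compat R A A' -> compat R (Pi A B) (Pi A' B)
| c_piR A B B' : compat R B B' -> compat R (Pi A B) (Pi A B')
| c_appL M M' N : compat R M M' -> compat R (App M N) (App M' N)
| c_appR M N N' : compat R N N' -> compat R (App M N) (App M N')
| c_lamA l A A' M : compat R A A' -> compat R (Lam l A M) (Lam l A' M)
| c_lamM l A M M' : compat R M M' -> compat R (Lam l A M) (Lam l A M').

Inductive beta_contr : term -> term -> Prop :=
| beta_c l A M N : beta_contr (App (Lam l A M) N) (subst1 M N).

(* eta: lambda x:A. M' x  |>  M'   (x not free in M') *)
Inductive eta_contr : term -> term -> Prop :=
| eta_c l A M : eta_contr (Lam l A (App (lift 1 M) (var 0))) M.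

Definition step : term -> term -> Prop := compat beta_contr.
Definition red : term -> term -> Prop := clos_refl_trans term step.

Definition conv : term -> term -> Prop :=
  clos_refl_sym_trans term (compat (fun x y => beta_contr x y \/ eta_contr x y)).

Fixpoint tags (t : term) : list nat :=
  match t with
  | var _ | U _ | Base _ | Val _ _ => []
  | Pi A B => tags A ++ tags B
  | App M N => tags M ++ tags N
  | Lam l A M => l :: tags A ++ tags M
  end.

Fixpoint occ (k : nat) (t : term) : bool :=
  match t with
  | var n => Nat.eqb n k
  | U _ | Base _ | Val _ _ => false
  | Pi A B => occ k A || occ (S k) B
  | App M N => occ k M || occ k N
  | Lam _ A M => occ k A || occ (S k) M
  end.

Inductive dterm : Type :=
| dvar (n : nat)
| dU (i : nat)
| dPi (A B : dterm)
| dApp (L M : dterm)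
| dLab (l : nat) (args : list dterm)
| dBase (b : nat)
| dVal (b n : nat).

Fixpoint dren (r : nat -> nat) (t : dterm) : dterm :=
  match t with
  | dvar n => dvar (r n)
  | dU i => dU i
  | dPi A B => dPi (dren r A) (dren (up_ren r) B)
  | dApp L M => dApp (dren r L) (dren r M)
  | dLab l args => dLab l (map (dren r) args)
  | dBase b => dBase b
  | dVal b n => dVal b n
  end.

Definition dlift (k : nat) (t : dterm) : dterm := dren (fun i => k + i) t.

Definition dup (s : nat -> dterm) : nat -> dterm :=
  fun i => match i with 0 => dvar 0 | S i => dlift 1 (s i) end.

Fixpoint dsubst (s : nat -> dterm) (t : dterm) : dterm :=
  match t with
  | dvar n => s n
  | dU i => dU i
  | dPi A B => dPi (dsubst s A) (dsubst (dup s) B)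
  | dApp L M => dApp (dsubst s L) (dsubst s M)
  | dLab l args => dLab l (map (dsubst s) args)
  | dBase b => dBase b
  | dVal b n => dVal b n
  end.

Fixpoint dterm_eqb (s t : dterm) : bool :=
  match s, t with
  | dvar n, dvar m => Nat.eqb n m
  | dU i, dU j => Nat.eqb i j
  | dPi A B, dPi A' B' => dterm_eqb A A' && dterm_eqb B B'
  | dApp L M, dApp L' M' => dterm_eqb L L' && dterm_eqb M M'
  | dLab l a, dLab l' a' =>
      Nat.eqb l l' &&
      (fix go (a a' : list dterm) : bool :=
         match a, a' with
         | [], [] => true
         | x :: a, y :: a' => dterm_eqb x y && go a a'
         | _, _ => false
         end) a a'
  | dBase b, dBase b' => Nat.eqb b b'
  | dVal b n, dVal b' n' => Nat.eqb b b' && Nat.eqb n n'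
  | _, _ => false
  end.

Fixpoint dlist_eqb (a a' : list dterm) : bool :=
  match a, a' with
  | [], [] => true
  | x :: a, y :: a' => dterm_eqb x y && dlist_eqb a a'
  | _, _ => false
  end.

(* A label-context entry  ell_name({xs : params}, x : argty |-> body : resty).
   params is a telescope: the k-th parameter type lives in the context of the
   k previous parameters; body and resty live in the context params, x
   (de Bruijn index 0 = x, index j+1 = the (n-j)-th parameter). *)
Record lentry : Type := mkL {
  lname : nat;
  lparams : list dterm;
  largty : dterm;
  lbody : dterm;
  lresty : dterm }.

Definition lctx := list lentry.

Definition lentry_eqb (e f : lentry) : bool :=
  Nat.eqb (lname e) (lname f) && dlist_eqb (lparams e) (lparams f) &&
  dterm_eqb (largty e) (largty f) && dterm_eqb (lbody e) (lbody f) &&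
  dterm_eqb (lresty e) (lresty f).

Definition lunion (D1 D2 : lctx) : lctx :=
  D1 ++ filter (fun e => negb (existsb (lentry_eqb e) D1)) D2.

(* the substitution [args/xs, N/x] for a label body *)
Definition lab_sub (args : list dterm) (N : dterm) : nat -> dterm :=
  let n := length args in
  fun i => match i with
           | 0 => N
           | S j => if j <? n then nth (n - 1 - j) args (dvar 0) else dvar (j - n)
           end.

Inductive dcompat (R : dterm -> dterm -> Prop) : dterm -> dterm -> Prop :=
| dc_base x y : R x y -> dcompat R x y
| dc_piL A A' B : dcompat R A A' -> dcompat R (dPi A B) (dPi A' B)
| dc_piR A B B' : dcompat R B B' -> dcompat R (dPi A B) (dPi A B')
| dc_appL L L' M : dcompat R L L' -> dcompat R (dApp L M) (dApp L' M)
| dc_appR L M M' : dcompat R M M' -> dcompat R (dApp L M) (dApp L M')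
| dc_lab l a1 a2 x y :
    dcompat R x y -> dcompat R (dLab l (a1 ++ x :: a2)) (dLab l (a1 ++ y :: a2)).

Inductive dcontr (D : lctx) : dterm -> dterm -> Prop :=
| dcontr_lab e args N :
    In e D ->
    dcontr D (dApp (dLab (lname e) args) N) (dsubst (lab_sub args N) (lbody e)).

Definition dstep (D : lctx) : dterm -> dterm -> Prop := dcompat (dcontr D).
Definition dred (D : lctx) : dterm -> dterm -> Prop := clos_refl_trans dterm (dstep D).

(* DCC equivalence: common reduct, or the eta-rule (and its symmetric form).
   The fresh variable x of the eta-rule is de Bruijn index 0 of an extended
   context. *)
Inductive dequiv (D : lctx) : dterm -> dterm -> Prop :=
| deq_red L M N : dred D L N -> dred D M N -> dequiv D L M
| deq_etaL L M Ns M' e :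
    dred D L (dLab (lname e) Ns) -> dred D M M' -> In e D ->
    dequiv D (dsubst (lab_sub (map (dlift 1) Ns) (dvar 0)) (lbody e))
             (dApp (dlift 1 M') (dvar 0)) ->
    dequiv D L M
| deq_etaR L M Ns M' e :
    dred D L (dLab (lname e) Ns) -> dred D M M' -> In e D ->
    dequiv D (dsubst (lab_sub (map (dlift 1) Ns) (dvar 0)) (lbody e))
             (dApp (dlift 1 M') (dvar 0)) ->
    dequiv D M L.

(* Contexts: [Gamma : list term], head = most recent variable (index 0).
   A variable of index i in a context of length g has level g-1-i. *)

Definition lev2 (g : nat) (M A : term) : list nat :=
  filter (fun l => occ (g - 1 - l) M || occ (g - 1 - l) A) (seq 0 g).

Definition nunion (L1 L2 : list nat) : list nat :=
  L1 ++ filter (fun x => negb (existsb (Nat.eqb x) L1)) L2.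

(* tyfv Gamma l = FV(A_l), where A_l is the type of the variable of level l
   (which lives in the prefix context of length l):
   FV(A_l) = FV(A_1') cup ... cup FV(A_m') cup (y_1:A_1', ..., y_m:A_m')
   with y_1..y_m the free variables of A_l (its type is a universe). *)
Fixpoint tyfv (G : list term) (l : nat) : list nat :=
  match G with
  | [] => []
  | A :: G' =>
      if Nat.eqb l (length G')
      then let L := lev2 (length G') A A in
           nunion (fold_left nunion (map (tyfv G') L) []) L
      else tyfv G' l
  end.

Definition FV (G : list term) (M A : term) : list nat :=
  let L := lev2 (length G) M A in
  nunion (fold_left nunion (map (tyfv G) L) []) L.

Fixpoint index_of (l : nat) (xs : list nat) : nat :=
  match xs with
  | [] => 0
  | x :: xs => if Nat.eqb x l then 0 else S (index_of l xs)
  end.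

(* move a DCC term from a context of length p to one of length q, sending the
   variable of level l to the variable of level f l *)
Definition relevel (p q : nat) (f : nat -> nat) (t : dterm) : dterm :=
  dren (fun i => q - 1 - f (p - 1 - i)) t.

(* translated context information: for each variable (head = index 0) the
   pair ([[A]], [[A]]_d) of its type *)
Definition cinfo := list (dterm * lctx).

(* the entry ell_t({xs : [[As]]}, x : [[A]] |-> [[M]] : [[B]]) *)
Definition lam_entry (G : list term) (E : cinfo) (t : nat) (xs : list nat)
    (A' M' B' : dterm) : lentry :=
  let g := length G in
  let n := length xs in
  let pos := fun l => index_of l xs in
  let fb := fun l => if Nat.eqb l g then n else pos l in
  mkL t
      (map (fun kl => relevel (snd kl) (fst kl) pos
                        (fst (nth (g - 1 - snd kl) E (dU 0, []))))
           (combine (seq 0 n) xs))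
      (relevel g n pos A')
      (relevel (S g) (S n) fb M')
      (relevel (S g) (S n) fb B').

Fixpoint ctxd (E : cinfo) : lctx :=
  match E with
  | [] => []
  | (_, DA) :: E' => lunion (ctxd E') DA
  end.

(* CC typing derivations together with the translation computed along them:
   tr G E M A M' DM  means  G |- M : A  with  [[M]] = M'  and  [[M]]_d = DM,
   E recording the translations of the types in G. *)
Inductive wf : list term -> cinfo -> Prop :=
| wf_nil : wf [] []
| wf_cons G E A i A' DA :
    wf G E -> tr G E A (U i) A' DA -> wf (A :: G) ((A', DA) :: E)
with tr : list term -> cinfo -> term -> term -> dterm -> lctx -> Prop :=
| tr_var G E k A A' DA :
    wf G E -> nth_error G k = Some A -> nth_error E k = Some (A', DA) ->
    tr G E (var k) (lift (S k) A) (dvar k) DA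
| tr_univ G E i :
    wf G E -> tr G E (U i) (U (S i)) (dU i) []
| tr_base G E b :
    wf G E -> tr G E (Base b) (U 0) (dBase b) []
| tr_val G E b n :
    wf G E -> tr G E (Val b n) (Base b) (dVal b n) []
| tr_pi G E A B i j A' DA B' DB :
    tr G E A (U i) A' DA ->
    tr (A :: G) ((A', DA) :: E) B (U j) B' DB ->
    tr G E (Pi A B) (U (Nat.max i j)) (dPi A' B') (lunion DA DB)
| tr_app G E M N A B k M' DM N' DN T' DT :
    tr G E M (Pi A B) M' DM ->
    tr G E N A N' DN ->
    tr G E (subst1 B N) (U k) T' DT ->
    tr G E (App M N) (subst1 B N) (dApp M' N') (lunion (lunion DM DN) DT)
| tr_lam G E t A M B i j A' DA B' DB M' DM :
    tr G E A (U i) A' DA ->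
    tr (A :: G) ((A', DA) :: E) B (U j) B' DB ->
    tr (A :: G) ((A', DA) :: E) M B M' DM ->
    tr G E (Lam t A M) (Pi A B)
       (dLab t (map (fun l => dvar (length G - 1 - l)) (FV G (Lam t A M) (Pi A B))))
       (lunion DA DM ++ [lam_entry G E t (FV G (Lam t A M) (Pi A B)) A' M' B'])
| tr_conv G E M A B i M' DM B' DB :
    tr G E M A M' DM ->
    tr G E B (U i) B' DB ->
    conv A B ->
    tr G E M B M' (lunion DM DB).

(* Main.v *)
Require Import Defs.
From Stdlib Require Import List Arith Lia Bool Relations.
Import ListNotations.

Fixpoint dterm_ind' (P : dterm -> Prop)
  (Hv : forall n, P (dvar n)) (HU : forall i, P (dU i))
  (HPi : forall A B, P A -> P B -> P (dPi A B))
  (HApp : forall L M, P L -> P M -> P (dApp L M))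
  (HLab : forall l args, Forall P args -> P (dLab l args))
  (HB : forall b, P (dBase b)) (HVal : forall b n, P (dVal b n)) (t : dterm) {struct t} : P t :=
  match t with
  | dvar n => Hv n
  | dU i => HU i
  | dPi A B => HPi A B (dterm_ind' P Hv HU HPi HApp HLab HB HVal A) (dterm_ind' P Hv HU HPi HApp HLab HB HVal B)
  | dApp L M => HApp L M (dterm_ind' P Hv HU HPi HApp HLab HB HVal L) (dterm_ind' P Hv HU HPi HApp HLab HB HVal M)
  | dLab l args => HLab l args ((fix go (a : list dterm) : Forall P a :=
        match a with [] => Forall_nil P | x :: a' => Forall_cons x (dterm_ind' P Hv HU HPi HApp HLab HB HVal x) (go a') end) args)
  | dBase b => HB b
  | dVal b n => HVal b n
  end.

Ltac labcase := rewrite Forall_forall in *; apply map_ext_in; intros; eauto.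

Lemma dren_ext : forall t r r', (forall i, r i = r' i) -> dren r t = dren r' t.
Proof.
  induction t using dterm_ind'; intros r r' Hr; simpl; f_equal; auto.
  - apply IHt2. intros [|i]; simpl; auto.
  - rewrite Forall_forall in *; apply map_ext_in; intros; eauto.
Qed.

Lemma dsubst_ext : forall t s s', (forall i, s i = s' i) -> dsubst s t = dsubst s' t.
Proof.
  induction t using dterm_ind'; intros s s' Hr; simpl; f_equal; auto.
  - apply IHt2. intros [|i]; simpl; auto. unfold dlift; rewrite Hr; auto.
  - rewrite Forall_forall in *; apply map_ext_in; intros; eauto.
Qed.

Lemma dren_dren : forall t r r', dren r (dren r' t) = dren (fun i => r (r' i)) t.
Proof.
  induction t using dterm_ind'; intros r r'; simpl; f_equal; auto.
  - rewrite IHt2. apply dren_ext. intros [|i]; simpl; auto.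
  - rewrite map_map. rewrite Forall_forall in *; apply map_ext_in; intros; eauto.
Qed.

Lemma dsubst_dren : forall t s r, dsubst s (dren r t) = dsubst (fun i => s (r i)) t.
Proof.
  induction t using dterm_ind'; intros s r; simpl; f_equal; auto.
  - rewrite IHt2. apply dsubst_ext. intros [|i]; simpl; auto.
  - rewrite map_map. rewrite Forall_forall in *; apply map_ext_in; intros; eauto.
Qed.

Lemma dren_dsubst : forall t s r, dren r (dsubst s t) = dsubst (fun i => dren r (s i)) t.
Proof.
  induction t using dterm_ind'; intros s r; simpl; f_equal; auto.
  - rewrite IHt2. apply dsubst_ext. intros [|i]; simpl; auto.
    unfold dlift. rewrite !dren_dren. apply dren_ext. intros; simpl; auto.
  - rewrite map_map. rewrite Forall_forall in *; apply map_ext_in; intros; eauto.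
Qed.

Lemma dsubst_dup_lift : forall t s, dsubst (dup s) (dlift 1 t) = dlift 1 (dsubst s t).
Proof.
  intros. unfold dlift. rewrite dsubst_dren, dren_dsubst. apply dsubst_ext. intros; simpl; auto.
Qed.

Lemma dsubst_dsubst : forall t s s', dsubst s (dsubst s' t) = dsubst (fun i => dsubst s (s' i)) t.
Proof.
  induction t using dterm_ind'; intros s s'; simpl; f_equal; auto.
  - rewrite IHt2. apply dsubst_ext. intros [|i]; simpl; auto.
    rewrite dsubst_dup_lift. auto.
  - rewrite map_map. rewrite Forall_forall in *; apply map_ext_in; intros; eauto.
Qed.

Lemma dren_as_dsubst : forall t r, dren r t = dsubst (fun i => dvar (r i)) t.
Proof.
  induction t using dterm_ind'; intros r; simpl; f_equal; auto.
  - rewrite IHt2. apply dsubst_ext. intros [|i]; simpl; auto.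
  - rewrite Forall_forall in *; apply map_ext_in; intros; eauto.
Qed.

Lemma dsubst_id : forall t, dsubst dvar t = t.
Proof.
  induction t using dterm_ind'; simpl; f_equal; auto.
  - rewrite <- IHt2 at 2. apply dsubst_ext. intros [|i]; simpl; auto.
  - rewrite Forall_forall in *. rewrite <- map_id. apply map_ext_in; intros; eauto.
Qed.

Lemma subst_ext : forall t s s', (forall i, s i = s' i) -> subst s t = subst s' t.
Proof.
  induction t; intros s s' Hr; simpl; f_equal; auto;
  match goal with IH : forall s s', _ -> subst s ?t = _ |- subst (up _) ?t = _ =>
    apply IH; intros [|i]; simpl; auto; rewrite Hr; auto end.
Qed.

Lemma subst_id : forall t, subst var t = t.
Proof.
  induction t; simpl; f_equal; auto;
  match goal with IH : subst var ?t = ?t |- subst (up var) ?t = _ =>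
    rewrite <- IH at 2; apply subst_ext; intros [|i]; simpl; auto end.
Qed.

Lemma dlist_go : forall a a', (fix go (a a' : list dterm) : bool :=
         match a, a' with
         | [], [] => true
         | x :: a, y :: a' => dterm_eqb x y && go a a'
         | _, _ => false
         end) a a' = dlist_eqb a a'.
Proof. induction a; destruct a'; simpl; auto; try (rewrite IHa; auto). Qed.

Lemma dterm_eqb_sound : forall s t, dterm_eqb s t = true -> s = t.
Proof.
  induction s using dterm_ind'; destruct t; simpl; intros Hq; try discriminate;
    repeat rewrite andb_true_iff in Hq; repeat rewrite Nat.eqb_eq in Hq; intuition (subst; auto).
  - f_equal; auto.
  - f_equal; auto.
  - rewrite dlist_go in H1. f_equal. revert args0 H1. induction H; destruct args0; simpl; intros; try discriminate; auto.
    apply andb_true_iff in H1 as [H1 H2]. f_equal; auto.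
Qed.
Definition dcl (k : nat) (t : dterm) : Prop :=
  forall s1 s2, (forall i, i < k -> s1 i = s2 i) -> dsubst s1 t = dsubst s2 t.

Definition inst (args : list dterm) (body : dterm) : dterm :=
  dsubst (lab_sub (map (dlift 1) args) (dvar 0)) body.

Inductive gcontr (D : lctx) : dterm -> dterm -> Prop :=
| gcontr_lab e args N :
    In e D -> dcl (S (length args)) (lbody e) ->
    gcontr D (dApp (dLab (lname e) args) N) (dsubst (lab_sub args N) (lbody e)).

Definition gred (D : lctx) := clos_refl_trans dterm (dcompat (gcontr D)).

Inductive RB (D : lctx) : dterm -> term -> Prop :=
| rb_var k : RB D (dvar k) (var k)
| rb_U i : RB D (dU i) (U i)
| rb_base b : RB D (dBase b) (Base b)
| rb_val b n : RB D (dVal b n) (Val b n)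
| rb_pi A B A0 B0 : RB D A A0 -> RB D B B0 -> RB D (dPi A B) (Pi A0 B0)
| rb_app A B A0 B0 : RB D A A0 -> RB D B B0 -> RB D (dApp A B) (App A0 B0)
| rb_lab t args A0 N0 e d1 :
    In e D -> lname e = t -> dcl (S (length args)) (lbody e) ->
    gred D (inst args (lbody e)) d1 -> RB D d1 N0 -> RB D (dLab t args) (Lam t A0 N0).

Lemma nth_map_d : forall (f : dterm -> dterm) l k d, k < length l ->
  nth k (map f l) d = f (nth k l (dvar 0)).
Proof.
  intros. rewrite nth_indep with (d' := f (dvar 0)) by (rewrite length_map; auto).
  apply map_nth.
Qed.

Lemma labeq : forall args body s, dcl (S (length args)) body ->
  inst (map (dsubst s) args) body = dsubst (dup s) (inst args body).
Proof.
  intros args body s Hc. unfold inst. rewrite dsubst_dsubst. apply Hc.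
  intros [|j] Hj; simpl; auto. rewrite !length_map.
  destruct (Nat.ltb_spec j (length args)); [|lia].
  rewrite (nth_map_d (dlift 1) (map (dsubst s) args)) by (rewrite length_map; lia).
  rewrite (nth_map_d (dsubst s) args) by lia.
  rewrite (nth_map_d (dlift 1) args) by lia. rewrite dsubst_dup_lift. auto.
Qed.

Lemma betaeq : forall args body Q, dcl (S (length args)) body ->
  dsubst (fun i => match i with 0 => Q | S j => dvar j end) (inst args body)
  = dsubst (lab_sub args Q) body.
Proof.
  intros args body Q Hc. unfold inst. rewrite dsubst_dsubst. apply Hc.
  intros [|j] Hj; simpl; auto. rewrite !length_map.
  destruct (Nat.ltb_spec j (length args)); [|lia].
  rewrite nth_map_d by lia. unfold dlift. rewrite dsubst_dren. simpl. apply dsubst_id.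
Qed.

Lemma gstep_subst : forall D x y, dcompat (gcontr D) x y ->
  forall s, dcompat (gcontr D) (dsubst s x) (dsubst s y).
Proof.
  intros D x y H; induction H; intros s; simpl.
  - destruct H. simpl. 
    replace (dsubst s (dsubst (lab_sub args N) (lbody e)))
      with (dsubst (lab_sub (map (dsubst s) args) (dsubst s N)) (lbody e)).
    + apply dc_base. constructor; auto. rewrite length_map; auto.
    + rewrite dsubst_dsubst. apply H0. intros [|j] Hj; simpl; auto.
      rewrite length_map. destruct (Nat.ltb_spec j (length args)); [|lia].
      rewrite nth_map_d by lia. auto.
  - apply dc_piL; auto.
  - apply dc_piR; auto.
  - apply dc_appL; auto.
  - apply dc_appR; auto.
  - rewrite !map_app. simpl. apply dc_lab; auto.
Qed.

Lemma gred_subst : forall D x y, gred D x y -> forall s, gred D (dsubst s x) (dsubst s y).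
Proof.
  intros D x y H; induction H; intros s.
  - apply rt_step. apply gstep_subst; auto.
  - apply rt_refl.
  - apply rt_trans with (dsubst s y); [apply IHclos_refl_trans1 | apply IHclos_refl_trans2].
Qed.

Lemma gred_congr : forall D (f : dterm -> dterm),
  (forall x y, dcompat (gcontr D) x y -> dcompat (gcontr D) (f x) (f y)) ->
  forall x y, gred D x y -> gred D (f x) (f y).
Proof.
  intros D f Hf x y H; induction H.
  - apply rt_step; auto.
  - apply rt_refl.
  - apply rt_trans with (f y); auto.
Qed.

Lemma dup_ren : forall r i, dup (fun i => dvar (r i)) i = dvar (up_ren r i).
Proof. intros r [|i]; reflexivity. Qed.

Lemma RB_ren : forall D d m, RB D d m -> forall r,
  RB D (dsubst (fun i => dvar (r i)) d) (ren r m).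
Proof.
  intros D d m H; induction H; intros r; simpl; try (constructor; auto; fail).
  - constructor; auto. rewrite (dsubst_ext B _ _ (dup_ren r)). apply IHRB2.
  - apply rb_lab with e (dsubst (fun i => dvar (up_ren r i)) d1); auto.
    + rewrite length_map; auto.
    + rewrite labeq by auto. rewrite (dsubst_ext _ _ _ (dup_ren r)). apply gred_subst; auto.
Qed.

Lemma RB_lift : forall D d m, RB D d m -> RB D (dlift 1 d) (lift 1 m).
Proof. intros. unfold dlift, lift. rewrite dren_as_dsubst. apply RB_ren; auto. Qed.

Lemma RB_subst : forall D d m, RB D d m -> forall s' s,
  (forall i, occ i m = true -> RB D (s' i) (s i)) ->
  RB D (dsubst s' d) (subst s m).
Proof.
  intros D d m H; induction H; intros s' s Hs; simpl in *; try (constructor; auto; fail).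
  - apply Hs. apply Nat.eqb_refl.
  - constructor.
    + apply IHRB1; intros; apply Hs; rewrite H1; auto.
    + apply IHRB2. intros [|i] Hi; simpl. constructor. apply RB_lift. apply Hs. rewrite Hi, orb_true_r; auto.
  - constructor.
    + apply IHRB1; intros; apply Hs; rewrite H1; auto.
    + apply IHRB2; intros; apply Hs; rewrite H1, orb_true_r; auto.
  - apply rb_lab with e (dsubst (dup s') d1); auto.
    + rewrite length_map; auto.
    + rewrite labeq by auto. apply gred_subst; auto.
    + apply IHRB. intros [|i] Hi; simpl. constructor. apply RB_lift. apply Hs. rewrite Hi, orb_true_r; auto.
Qed.

Lemma sim_step : forall D m m1, step m m1 -> forall d, RB D d m ->
  exists d1, gred D d d1 /\ RB D d1 m1.
Proof.
  intros D m m1 H; induction H; intros d Hd.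
  - destruct H. inversion Hd; subst.
    inversion H2 as [| | | | | | t args A1 N1 e d1 He Hn Hc Hg Hr]; subst.
    exists (dsubst (fun i => match i with 0 => B | S j => dvar j end) d1). split.
    + apply rt_trans with (dsubst (lab_sub args B) (lbody e)).
      * apply rt_step. apply dc_base. constructor; auto.
      * rewrite <- betaeq by auto. apply gred_subst; auto.
    + unfold subst1. apply RB_subst; auto. intros [|i] _; simpl; auto. constructor.
  - inversion Hd as [| | | |? ? ? ? HA HB|? ? ? ? HA HB|]; subst. destruct (IHcompat _ HA) as [d1 [Hr Hb]].
    exists (dPi d1 B0); split; [|constructor; auto].
    apply (gred_congr D (fun x => dPi x B0)); auto. intros; apply dc_piL; auto.
  - inversion Hd as [| | | |? ? ? ? HA HB|? ? ? ? HA HB|]; subst. destruct (IHcompat _ HB) as [d1 [Hr Hb]].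
    exists (dPi A0 d1); split; [|constructor; auto].
    apply (gred_congr D (fun x => dPi A0 x)); auto. intros; apply dc_piR; auto.
  - inversion Hd as [| | | |? ? ? ? HA HB|? ? ? ? HA HB|]; subst. destruct (IHcompat _ HA) as [d1 [Hr Hb]].
    exists (dApp d1 B); split; [|constructor; auto].
    apply (gred_congr D (fun x => dApp x B)); auto. intros; apply dc_appL; auto.
  - inversion Hd as [| | | |? ? ? ? HA HB|? ? ? ? HA HB|]; subst. destruct (IHcompat _ HB) as [d1 [Hr Hb]].
    exists (dApp A d1); split; [|constructor; auto].
    apply (gred_congr D (fun x => dApp A x)); auto. intros; apply dc_appR; auto.
  - inversion Hd; subst. exists (dLab (lname e) args); split; [apply rt_refl|].
    eapply rb_lab; eauto.
  - inversion Hd as [| | | | | |? ? ? ? e d1 He Hn Hc Hg Hr0]; subst. destruct (IHcompat _ Hr0) as [d2 [Hr Hb]].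
    exists (dLab (lname e) args); split; [apply rt_refl|].
    apply rb_lab with e d2; auto. apply rt_trans with d1; auto.
Qed.

Lemma sim_red : forall D m m1, red m m1 -> forall d, RB D d m ->
  exists d1, gred D d d1 /\ RB D d1 m1.
Proof.
  intros D m m1 H; induction H; intros d Hd.
  - eapply sim_step; eauto.
  - exists d; split; auto. apply rt_refl.
  - destruct (IHclos_refl_trans1 _ Hd) as [d1 [H1 H2]].
    destruct (IHclos_refl_trans2 _ H2) as [d2 [H3 H4]].
    exists d2; split; auto. eapply rt_trans; eauto.
Qed.

Lemma gred_dred : forall D x y, gred D x y -> dred D x y.
Proof.
  intros D x y H; induction H.
  - apply rt_step. unfold dstep. induction H; try (constructor; auto; fail).
    + destruct H. apply dc_base. constructor; auto.
  - apply rt_refl.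
  - eapply rt_trans; eauto.
Qed.
Definition sub (D1 D2 : lctx) : Prop :=
  forall e, In e D1 -> exists e', In e' D2 /\ lname e' = lname e /\ lbody e' = lbody e.

Lemma incl_sub : forall D1 D2, incl D1 D2 -> sub D1 D2.
Proof. intros D1 D2 H e He. exists e; auto. Qed.

Lemma sub_trans : forall D1 D2 D3, sub D1 D2 -> sub D2 D3 -> sub D1 D3.
Proof.
  intros D1 D2 D3 H1 H2 e He. destruct (H1 e He) as [e' [He' [Hn Hb]]].
  destruct (H2 e' He') as [e'' [He'' [Hn' Hb']]]. exists e''; repeat split; congruence.
Qed.

Lemma lentry_eqb_sound : forall e f, lentry_eqb e f = true -> lname e = lname f /\ lbody e = lbody f.
Proof.
  intros e f H. unfold lentry_eqb in H. repeat rewrite andb_true_iff in H.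
  destruct H as [[[[H1 H2] H3] H4] H5]. apply Nat.eqb_eq in H1. split; auto.
  apply dterm_eqb_sound; auto.
Qed.

Lemma lunion_l : forall D1 D2, sub D1 (lunion D1 D2).
Proof. intros. apply incl_sub. unfold lunion. apply incl_appl, incl_refl. Qed.

Lemma lunion_r : forall D1 D2, sub D2 (lunion D1 D2).
Proof.
  intros D1 D2 e He. unfold lunion.
  destruct (existsb (lentry_eqb e) D1) eqn:Ex.
  - apply existsb_exists in Ex as [f [Hf Hq]]. apply lentry_eqb_sound in Hq as [H1 H2].
    exists f; repeat split; auto. apply in_or_app; auto.
  - exists e; repeat split; auto. apply in_or_app; right. apply filter_In; split; auto.
    rewrite Ex; auto.
Qed.

Lemma tr_scope : forall G E M A M' DM, tr G E M A M' DM ->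
  forall i, occ i M = true -> i < length G.
Proof.
  intros G E M A M' DM H; induction H; intros x Hx; simpl in *; try discriminate; auto.
  - apply Nat.eqb_eq in Hx; subst. apply nth_error_Some. congruence.
  - apply orb_true_iff in Hx as [Hx|Hx]; auto. apply IHtr2 in Hx. simpl in Hx. lia.
  - apply orb_true_iff in Hx as [Hx|Hx]; auto.
  - apply orb_true_iff in Hx as [Hx|Hx]; auto. apply IHtr3 in Hx. simpl in Hx. lia.
Qed.

Lemma dcl_dren : forall k r t, (forall i, r i < k) -> dcl k (dren r t).
Proof.
  intros k r t Hr s1 s2 Hs. rewrite !dsubst_dren. apply dsubst_ext. intros; apply Hs; auto.
Qed.

Lemma index_of_spec : forall l xs, In l xs -> index_of l xs < length xs /\ nth (index_of l xs) xs 0 = l.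
Proof.
  induction xs; simpl; intros H; [contradiction|].
  destruct (Nat.eqb_spec a l); subst; simpl; [split; auto; lia|].
  destruct H as [H|H]; [congruence|]. destruct (IHxs H). split; auto; lia.
Qed.

Lemma nunion_r : forall L1 L2 x, In x L2 -> In x (nunion L1 L2).
Proof.
  intros. unfold nunion. destruct (existsb (Nat.eqb x) L1) eqn:Ex.
  - apply existsb_exists in Ex as [y [Hy Hq]]. apply Nat.eqb_eq in Hq; subst. apply in_or_app; auto.
  - apply in_or_app; right. apply filter_In; split; auto. rewrite Ex; auto.
Qed.

Lemma key : forall g xs i,
  (i = 0 \/ exists k, i = S k /\ k < g /\ In (g - 1 - k) xs) ->
  lab_sub (map (dlift 1) (map (fun l => dvar (g - 1 - l)) xs)) (dvar 0)
    (S (length xs) - 1 - (if Nat.eqb (S g - 1 - i) g then length xs else index_of (S g - 1 - i) xs))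
  = dvar i.
Proof.
  intros g xs i [->|[k [-> [Hk Hin]]]].
  - replace (S g - 1 - 0) with g by lia. rewrite Nat.eqb_refl.
    replace (S (length xs) - 1 - length xs) with 0 by lia. reflexivity.
  - replace (S g - 1 - S k) with (g - 1 - k) by lia.
    destruct (Nat.eqb_spec (g - 1 - k) g); [lia|].
    destruct (index_of_spec _ _ Hin) as [Hp Hn].
    set (p := index_of (g - 1 - k) xs) in *.
    replace (S (length xs) - 1 - p) with (S (length xs - 1 - p)) by lia.
    simpl. rewrite !length_map.
    destruct (Nat.ltb_spec (length xs - 1 - p) (length xs)); [|lia].
    replace (length xs - 1 - (length xs - 1 - p)) with p by lia.
    rewrite nth_map_d by (rewrite length_map; lia).
    rewrite nth_indep with (d' := (fun l => dvar (g - 1 - l)) 0) by (rewrite length_map; lia).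
    change (dvar (g - 1 - 0)) with ((fun l => dvar (g - 1 - l)) 0). rewrite map_nth. rewrite Hn. unfold dlift. simpl. f_equal. lia.
Qed.

Lemma tr_RB : forall G E M A M' DM, tr G E M A M' DM ->
  forall D, sub DM D -> RB D M' M.
Proof.
  intros G E M A M' DM H; induction H; intros D HD; try constructor.
  - apply IHtr1. eapply sub_trans; [apply lunion_l|exact HD].
  - apply IHtr2. eapply sub_trans; [apply lunion_r|exact HD].
  - apply IHtr1. eapply sub_trans; [apply lunion_l|]. eapply sub_trans; [apply lunion_l|exact HD].
  - apply IHtr2. eapply sub_trans; [apply lunion_r|]. eapply sub_trans; [apply lunion_l|exact HD].
  -
    set (xs := FV G (Lam t A M) (Pi A B)) in *.
    destruct (HD (lam_entry G E t xs A' M' B')) as [e [He [Hn Hb]]].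
    { apply in_or_app; right; left; auto. }
    simpl in Hn, Hb.
    apply rb_lab with e (inst (map (fun l => dvar (length G - 1 - l)) xs) (lbody e)); auto.
    + rewrite Hb. unfold relevel. apply dcl_dren. rewrite length_map. intros; lia.
    + apply rt_refl.
    + rewrite Hb. unfold inst, relevel. rewrite dsubst_dren. rewrite <- (subst_id M).
      apply RB_subst.
      * apply IHtr3. eapply sub_trans; [|apply HD]. eapply sub_trans; [apply lunion_r|].
        apply incl_sub. apply incl_appl, incl_refl.
      * intros x Hi. simpl length.
        rewrite key; [constructor|].
        destruct x as [|k]; [left; auto|right].
        pose proof (tr_scope _ _ _ _ _ _ H1 _ Hi) as Hs. simpl in Hs.
        exists k; repeat split; try lia.
        unfold xs, FV. cbv zeta. apply nunion_r. unfold lev2. apply filter_In. split.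
        -- apply in_seq. lia.
        -- replace (length G - 1 - (length G - 1 - k)) with k by lia. simpl. rewrite Hi.
           rewrite orb_true_r. auto.
  - apply IHtr1. eapply sub_trans; [apply lunion_l|exact HD].
Qed.

Theorem corollary3p15 (M : term) (b n : nat) (M' : dterm) (DM : lctx) :
  tr [] [] M (Base b) M' DM ->
  NoDup (tags M) ->
  red M (Val b n) ->
  exists v' : dterm,
    dred (lunion (ctxd []) DM) M' v' /\ dequiv (lunion (ctxd []) DM) v' (dVal b n).
Proof.
  intros Htr _ Hred.
  pose proof (tr_RB _ _ _ _ _ _ Htr (lunion (ctxd []) DM) (lunion_r _ _)) as HR.
  destruct (sim_red _ _ _ Hred _ HR) as [d [Hg Hb]].
  inversion Hb; subst.
  exists (dVal b n). split.
  - apply gred_dred; auto.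
  - apply deq_red with (dVal b n); apply rt_refl.
Qed.
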